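(* If $n$ is large enough, then $\mathrm{ex}^{\mathrm{col}}(n,(C_4,K_2),F_2)=\binom{\lfloor n/2\rfloor}{2}\binom{\lceil n/2\rceil}{2}+1$.
   Context: $F_2$ (the 2-fan) is the graph consisting of two triangles sharing exactly one vertex. $C_4$ is the 4-cycle. $\mathcal N(H,G)$ is the number of subgraphs of $G$ isomorphic to $H$. For a graph $G$ with edges colored $1,2$, $G_i$ is the subgraph of edges of color $i$; $\mathrm{ex}^{\mathrm{col}}(n,(H_1,H_2),F)$ is the maximum of $\mathcal N(H_1,G_1)+\mathcal N(H_2,G_2)$ over all $F$-free $n$-vertex graphs $G$ and all 2-colorings of their edges. *)

(* Defs.v *)
From mathcomp Require Import all_boot.
Set Implicit Arguments. Unset Strict Implicit. Unset Printing Implicit Defensive.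

Definition simple_graph n (E : {set {set 'I_n}}) : Prop :=
  forall e, e \in E -> #|e| = 2.

(* Number of subgraphs of the graph with edge set E (on 'I_n) isomorphic to the
   graph H with edge set EH (on 'I_k).  A subgraph is a pair (W, S) with
   W a vertex set and S a set of edges of E; it is isomorphic to H iff there
   is a bijection f : 'I_k -> W carrying the edges of H exactly onto S. *)
Definition copies k (EH : {set {set 'I_k}}) n (E : {set {set 'I_n}}) : nat :=
  #|[set p : {set 'I_n} * {set {set 'I_n}} |
      (p.2 \subset E) &&
      [exists f : {ffun 'I_k -> 'I_n},
         [&& injectiveb f, p.1 == f @: setT & p.2 == [set f @: e | e : {set 'I_k} in EH]]]]|.

Definition edge k (a b : nat) : {set 'I_k.+1} := [set inord a; inord b].

Definition K2 : {set {set 'I_2}} := [set edge 1 0 1].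
Definition C4 : {set {set 'I_4}} :=
  [set edge 3 0 1; edge 3 1 2; edge 3 2 3; edge 3 3 0].
Definition F2 : {set {set 'I_5}} :=
  [set edge 4 0 1; edge 4 0 2; edge 4 1 2; edge 4 0 3; edge 4 0 4; edge 4 3 4].

(* A 2-colouring of the edges: c e = true means colour 1, false colour 2. *)
Definition colour_class n (E : {set {set 'I_n}}) (c : {set 'I_n} -> bool)
  (b : bool) : {set {set 'I_n}} := [set e in E | c e == b].

Definition col_count k1 (H1 : {set {set 'I_k1}}) k2 (H2 : {set {set 'I_k2}})
  n (E : {set {set 'I_n}}) (c : {set 'I_n} -> bool) : nat :=
  copies H1 (colour_class E c true) + copies H2 (colour_class E c false).

Definition free k (F : {set {set 'I_k}}) n (E : {set {set 'I_n}}) : Prop :=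
  copies F E = 0.

(* Main.v *)
Require Import Defs.
From mathcomp Require Import all_boot.
From mathcomp Require Import zify.
Set Implicit Arguments. Unset Strict Implicit. Unset Printing Implicit Defensive.

Lemma set2_eq (T : finType) (a b c d : T) : [set a; b] = [set c; d] ->
  (a = c /\ b = d) \/ (a = d /\ b = c).
Proof.
move=> E.
have: a \in [set c; d] by rewrite -E !inE eqxx.
have: b \in [set c; d] by rewrite -E !inE eqxx orbT.
have: c \in [set a; b] by rewrite E !inE eqxx.
have: d \in [set a; b] by rewrite E !inE eqxx orbT.
rewrite !inE => /pred2P h1 /pred2P h2 /pred2P h3 /pred2P h4.
by case: h1 => ?; case: h2 => ?; case: h3 => ?; case: h4 => ?; subst; auto.
Qed.

Lemma card_bigcup_le (I T : finType) (X : {set I}) (F : I -> {set T}) :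
  #|\bigcup_(i in X) F i| <= \sum_(i in X) #|F i|.
Proof.
apply: (big_ind2 (fun (A : {set T}) s => #|A| <= s)) => //.
- by rewrite cards0.
- move=> A1 s1 A2 s2 h1 h2; apply: leq_trans (leq_card_setU _ _) _.
  exact: leq_add.
Qed.

Lemma nth_inj (T : eqType) k (s : seq T) x0 :
  uniq s -> size s = k -> injectiveb [ffun i : 'I_k => nth x0 s i].
Proof.
move=> us sz; apply/injectiveP => i j; rewrite !ffunE => /eqP.
rewrite nth_uniq ?sz ?ltn_ord // => /eqP h; exact: val_inj.
Qed.

Lemma inordE k i : i < k.+1 -> nat_of_ord (@inord k i) = i.
Proof. by move=> h; rewrite inordK. Qed.

Lemma ordT4 : [set: 'I_4] = [set inord 0; inord 1; inord 2; inord 3].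
Proof.
apply/setP => x; rewrite !inE.
have: x = inord x by apply: val_inj; rewrite /= inordK.
case: x => [[|[|[|[|m]]]] hx] //= ->; by rewrite eqxx ?orbT.
Qed.

Lemma ordT2 : [set: 'I_2] = [set inord 0; inord 1].
Proof.
apply/setP => x; rewrite !inE.
have: x = inord x by apply: val_inj; rewrite /= inordK.
case: x => [[|[|m]] hx] //= ->; by rewrite eqxx ?orbT.
Qed.

Definition cyc (T : finType) (a b c d : T) : {set {set T}} :=
  [set [set a; b]; [set b; c]; [set c; d]; [set d; a]].


Definition C4set n (F : {set {set 'I_n}}) :=
  [set p : {set 'I_n} * {set {set 'I_n}} |
      (p.2 \subset F) &&
      [exists f : {ffun 'I_4 -> 'I_n},
         [&& injectiveb f, p.1 == f @: setT & p.2 == [set f @: e | e : {set 'I_4} in C4]]]].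

Lemma copiesC4E n (F : {set {set 'I_n}}) : copies C4 F = #|C4set F|.
Proof. by []. Qed.

Lemma C4img n (f : {ffun 'I_4 -> 'I_n}) : [set f @: e | e : {set 'I_4} in C4] =
  cyc (f (inord 0)) (f (inord 1)) (f (inord 2)) (f (inord 3)).
Proof. by rewrite /C4 /edge /cyc !imsetU !imset_set1 !imsetU !imset_set1. Qed.

Lemma C4setP n (F : {set {set 'I_n}}) (p : {set 'I_n} * {set {set 'I_n}}) : reflect
  (p.2 \subset F /\ exists a b c d : 'I_n,
     [/\ uniq [:: a; b; c; d], p.1 = [set a; b; c; d] & p.2 = cyc a b c d])
  (p \in C4set F).
Proof.
apply: (iffP idP).
- rewrite inE => /andP[sub /existsP[f /and3P[/injectiveP fi /eqP e1 /eqP e2]]].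
  split=> //.
  exists (f (inord 0)), (f (inord 1)), (f (inord 2)), (f (inord 3)).
  split.
  + have ne : forall i j, i < 4 -> j < 4 -> i != j -> f (inord i) != f (inord j).
      move=> i j hi hj hij; apply/negP => /eqP /fi /(congr1 val) /=.
      by rewrite !inordK //; apply/eqP.
    by rewrite /= !inE !negb_or !ne.
  + by rewrite e1 ordT4 !imsetU !imset_set1.
  + by rewrite e2 C4img.
- case=> sub [a [b [c [d [u e1 e2]]]]].
  rewrite inE sub /=; apply/existsP.
  exists [ffun i : 'I_4 => nth a [:: a; b; c; d] i].
  rewrite nth_inj //= e1 e2 C4img ordT4 !imsetU !imset_set1 !ffunE !inordK //=.
  by rewrite !eqxx.
Qed.

Definition K2set n (F : {set {set 'I_n}}) :=
  [set p : {set 'I_n} * {set {set 'I_n}} |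
      (p.2 \subset F) &&
      [exists f : {ffun 'I_2 -> 'I_n},
         [&& injectiveb f, p.1 == f @: setT & p.2 == [set f @: e | e : {set 'I_2} in K2]]]].

Lemma copiesK2 n (F : {set {set 'I_n}}) :
  (forall e, e \in F -> #|e| = 2) -> copies K2 F = #|F|.
Proof.
move=> sF.
have -> : copies K2 F = #|K2set F| by [].
have -> : K2set F = [set (e, [set e]) | e in F].
  apply/setP => -[W S]; rewrite inE /=.
  apply/idP/idP.
  - case/andP=> sub /existsP[f /and3P[/injectiveP fi /eqP e1 /eqP e2]].
    rewrite /K2 /edge imset_set1 imsetU !imset_set1 in e2.
    rewrite ordT2 imsetU !imset_set1 in e1.
    subst; apply/imsetP; exists [set f (inord 0); f (inord 1)] => //.
    by move/subsetP: sub; apply; rewrite inE.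
  - case/imsetP => e eF [-> ->].
    have /eqP/cards2P [x [y [xy ee]]] := sF e eF; subst e.
    rewrite sub1set eF /=; apply/existsP.
    exists [ffun i : 'I_2 => nth x [:: x; y] i].
    rewrite nth_inj //=; last by rewrite andbT inE.
    rewrite ordT2 /K2 imset_set1 /edge !imsetU !imset_set1.
    by rewrite !ffunE !inordK //= !eqxx.
by apply: card_imset => e1 e2 [].
Qed.

Definition F2set n (F : {set {set 'I_n}}) :=
  [set p : {set 'I_n} * {set {set 'I_n}} |
      (p.2 \subset F) &&
      [exists f : {ffun 'I_5 -> 'I_n},
         [&& injectiveb f, p.1 == f @: setT & p.2 == [set f @: e | e : {set 'I_5} in F2]]]].

Lemma F2img n (f : {ffun 'I_5 -> 'I_n}) : [set f @: e | e : {set 'I_5} in F2] =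
  [set [set f (inord 0); f (inord 1)]; [set f (inord 0); f (inord 2)];
       [set f (inord 1); f (inord 2)]; [set f (inord 0); f (inord 3)];
       [set f (inord 0); f (inord 4)]; [set f (inord 3); f (inord 4)]].
Proof. by rewrite /F2 /edge !imsetU !imset_set1 !imsetU !imset_set1. Qed.

Lemma F2free_no n (F : {set {set 'I_n}}) : free F2 F ->
  forall u a b p q : 'I_n, uniq [:: u; a; b; p; q] ->
  [set u; a] \in F -> [set u; b] \in F -> [set a; b] \in F ->
  [set u; p] \in F -> [set u; q] \in F -> [set p; q] \in F -> False.
Proof.
move=> fr u a b p q un h1 h2 h3 h4 h5 h6.
have : 0 < copies F2 F.
  have -> : copies F2 F = #|F2set F| by [].
  apply/card_gt0P.
  pose f := [ffun i : 'I_5 => nth u [:: u; a; b; p; q] i].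
  exists (f @: setT, [set f @: e | e : {set 'I_5} in F2]).
  rewrite inE /=; apply/andP; split.
    rewrite F2img /f !ffunE !inordK //=.
    apply/subsetP => e; rewrite !inE => H; repeat (case/orP: H => H); by move/eqP: H => ->.
  by apply/existsP; exists f; rewrite nth_inj //= !eqxx.
by rewrite fr.
Qed.

Lemma F2set_elim n (F : {set {set 'I_n}}) p : p \in F2set F ->
  exists g : nat -> 'I_n,
  [/\ uniq [:: g 0; g 1; g 2; g 3; g 4],
     [set g 0; g 1] \in F, [set g 0; g 2] \in F, [set g 1; g 2] \in F &
     [/\ [set g 0; g 3] \in F, [set g 0; g 4] \in F & [set g 3; g 4] \in F]].
Proof.
rewrite inE => /andP[sub /existsP[f /and3P[/injectiveP fi _ /eqP e2]]].
exists (fun i => f (inord i)).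
have ne : forall i j, i < 5 -> j < 5 -> i != j -> f (inord i) != f (inord j).
  move=> i j hi hj hij; apply/negP => /eqP /fi /(congr1 val) /=.
  by rewrite !inordK //; apply/eqP.
rewrite F2img in e2; move/subsetP: sub; rewrite e2 => sub.
split; first by rewrite /= !inE !negb_or !ne.
all: try split.
all: by apply: sub; rewrite !inE eqxx ?orbT.
Qed.

Lemma bin2_double m : 'C(m, 2) * 2 = m * m.-1.
Proof.
elim: m => [|m IH] //.
rewrite binS bin1 mulnDl IH; case: m {IH} => //= m; lia.
Qed.

Lemma set2C (T : finType) (a b : T) : [set a; b] = [set b; a].
Proof. exact: setUC. Qed.

Lemma set4_rot (T : finType) (a b c d : T) : [set a; b; c; d] = [set b; c; d; a].
Proof.
apply/setP => x; rewrite !inE.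
by case: (x == a); case: (x == b); case: (x == c); case: (x == d).
Qed.

Lemma cyc_rot (T : finType) (a b c d : T) : cyc a b c d = cyc b c d a.
Proof.
rewrite /cyc; apply/setP => x; rewrite !inE.
by case: (x == [set a; b]); case: (x == [set b; c]); case: (x == [set c; d]);
   case: (x == [set d; a]).
Qed.

Lemma uniq4_rot (T : eqType) (a b c d : T) : uniq [:: a; b; c; d] = uniq [:: b; c; d; a].
Proof. by apply: perm_uniq; rewrite (perm_catC [:: a]). Qed.

Lemma cyc_split (T : finType) (a b c d : T) : cyc a b c d =
  [set [set a; x] | x in [set b; d]] :|: [set [set c; x] | x in [set b; d]].
Proof.
rewrite !imsetU !imset_set1 /cyc (set2C c b) (set2C a d).
apply/setP => x; rewrite !inE.
by case: (x == [set a; b]); case: (x == [set b; c]); case: (x == [set c; d]);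
   case: (x == [set d; a]).
Qed.

Lemma set4_split (T : finType) (a b c d : T) : [set a; b; c; d] = a |: (c |: [set b; d]).
Proof.
apply/setP => x; rewrite !inE.
by case: (x == a); case: (x == b); case: (x == c); case: (x == d).
Qed.

Definition Gf k x := (k - 1 - x) * 'C(x, 2).
Definition Tf k := 'C(k./2, 2) * 'C(uphalf k, 2).

Lemma par k : exists a, (k = a * 2 /\ k./2 = a /\ uphalf k = a) \/
                       (k = (a * 2).+1 /\ k./2 = a /\ uphalf k = a.+1).
Proof.
exists k./2; have := odd_double_half k; rewrite uphalf_half -muln2.
case: (odd k) => /= h; [right|left]; rewrite -{1}h ?add1n //.
Qed.

Lemma binS2 a : 'C(a.+1, 2) = 'C(a, 2) + a.
Proof. by rewrite binS bin1. Qed.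

Lemma Gmono1 k x : x.+1 * 2 <= k -> Gf k x <= Gf k x.+1.
Proof.
move=> h; rewrite /Gf binS2.
have hc := bin2_double x.
case: x h hc => [|x] h hc /=; simpl in hc; nia.
Qed.

Lemma Gmono k x y : x <= y -> y * 2 <= k -> Gf k x <= Gf k y.
Proof.
move=> xy; elim: y xy => [|y IH] xy hy.
  by rewrite leqn0 in xy; move/eqP: xy => ->.
case: (ltngtP x y.+1) xy => // [lt|->] _.
  apply: leq_trans (IH lt _) _; first by lia.
  by apply: Gmono1; lia.
done.
Qed.

Lemma Gstep k : 8 <= k -> Gf k (k./2).-1 + k./2 + 1 <= Gf k k./2.
Proof.
move=> hk; rewrite /Gf.
have [a [[ek [-> _]]|[ek [-> _]]]] := par k.
all: rewrite ek in hk *; clear ek.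
all: case: a hk => [|a] hk; first by lia.
all: rewrite binS2 -pred_Sn; have := bin2_double a; simpl => hc; nia.
Qed.

Lemma Tstep k : 0 < k -> Tf k.-1 + Gf k (k./2) = Tf k.
Proof.
move=> hk; rewrite /Tf /Gf.
have [a [[ek [-> ->]]|[ek [-> ->]]]] := par k.
- case: a ek => [|a] ek; first by rewrite ek in hk.
  have [b [[eb [-> ->]]|[eb [-> ->]]]] := par k.-1; try lia.
  have ab : b = a by lia.
  subst b; rewrite binS2; nia.
- have [b [[eb [-> ->]]|[eb [-> ->]]]] := par k.-1; try lia.
  have ab : b = a by lia.
  subst b; rewrite binS2; nia.
Qed.

Lemma crude_step k : k ^ 4 + k * 'C(k.+1, 2) + k.+1 <= k.+1 ^ 4.
Proof.
have := bin2_double k.+1; simpl => hc; nia.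
Qed.

Lemma bin2_le m : 'C(m, 2) <= m * m.
Proof. have := bin2_double m; case: m => //= m; nia. Qed.

Lemma half_le k : k./2 * 2 <= k.
Proof. by rewrite muln2 -{2}(odd_double_half k) leq_addl. Qed.

Lemma arithB1 k h d1 d2 SN SR : 8 <= k -> h = k./2 -> 0 < d1 -> d1 + d2 <= h ->
  SN <= 'C(d1.-1, 2) + d1 -> SR <= (k - 1 - d1) * 'C(d1.-1, 2) ->
  SN + SR + d2 + 1 <= Gf k h.
Proof.
move=> hk hh d1p dd hN hR.
have hl := half_le k; rewrite -hh in hl.
have g1 : Gf k d1.-1 <= Gf k h.-1 by apply: Gmono; lia.
have g2 := Gstep hk; rewrite -hh in g2.
have e : (k - 1 - d1) * 'C(d1.-1, 2) + 'C(d1.-1, 2) = Gf k d1.-1.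
  rewrite /Gf; case: d1 d1p dd hN hR {g1} => // d _ dd _ _ /=.
  have -> : k - 1 - d = (k - 1 - d.+1).+1 by lia.
  by rewrite mulSn addnC.
lia.
Qed.

Lemma arithB2 k h d1 d2 SR : 8 <= k -> h = k./2 -> d1 < h -> d1 + d2 <= h ->
  SR <= (k - 1 - d1) * 'C(d1, 2) -> SR + d2 + 1 <= Gf k h.
Proof.
move=> hk hh dh dd hR.
have hl := half_le k; rewrite -hh in hl.
have g1 : Gf k d1 <= Gf k h.-1 by apply: Gmono; lia.
have g2 := Gstep hk; rewrite -hh in g2.
have hR2 : SR <= Gf k d1 by []. clear hR; lia.
Qed.

Lemma arithB3 k h SR r : 8 <= k -> h = k./2 -> r = k - 1 - h ->
  SR <= 'C(h.-1, 2) + (r - 1) * 'C(h, 2) -> SR + 1 <= Gf k h.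
Proof.
move=> hk hh hr hR.
have hl := half_le k; rewrite -hh in hl.
have h4 : 4 <= h by rewrite hh; move/half_leq: hk.
rewrite /Gf -hr.
have -> : r = (r - 1).+1 by lia.
rewrite mulSn.
have : 'C(h, 2) = 'C(h.-1, 2) + h.-1 by case: h {hh hl hr hR} h4 => // h _; rewrite binS2.
lia.
Qed.

Definition adj n (F : {set {set 'I_n}}) (x y : 'I_n) := [set x; y] \in F.
Definition NB n (F : {set {set 'I_n}}) (U : {set 'I_n}) x := [set y in U | adj F x y].

Lemma adjC n (F : {set {set 'I_n}}) x y : adj F x y = adj F y x.
Proof. by rewrite /adj set2C. Qed.

Section Graph.
Variable n : nat.
Variables E E1 E2 : {set {set 'I_n}}.
Hypothesis HsE : forall e, e \in E -> #|e| = 2.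
Hypothesis HfE : free F2 E.
Hypothesis H1 : E1 \subset E.
Hypothesis H2 : E2 \subset E.
Hypothesis Hd : forall e, e \in E1 -> e \in E2 -> False.
Hypothesis Hc : forall e, e \in E -> (e \in E1) || (e \in E2).

Lemma adj1 x y : adj E1 x y -> adj E x y.
Proof. by move/(subsetP H1). Qed.
Lemma adj2 x y : adj E2 x y -> adj E x y.
Proof. by move/(subsetP H2). Qed.

Lemma adj_neq x y : adj E x y -> x != y.
Proof.
move=> /HsE h; apply/negP => /eqP xy; subst; by rewrite setUid cards1 in h.
Qed.

Lemma LF u a b p q : adj E u a -> adj E u b -> adj E a b ->
  adj E u p -> adj E u q -> adj E p q ->
  a != p -> a != q -> b != p -> b != q -> False.
Proof.
move=> h1 h2 h3 h4 h5 h6 ap aq bp bq.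
apply: (F2free_no HfE (u:=u) (a:=a) (b:=b) (p:=p) (q:=q)) => //.
by rewrite /= !inE !negb_or ap aq bp bq (adj_neq h1) (adj_neq h2) (adj_neq h3)
  (adj_neq h4) (adj_neq h5) (adj_neq h6).
Qed.

Definition cnt4 (U : {set 'I_n}) := #|[set p in C4set E1 | p.1 \subset U]|.
Definition e2c (U : {set 'I_n}) := #|[set e in E2 | e \subset U]|.

Definition phi v z (P : {set 'I_n}) : {set 'I_n} * {set {set 'I_n}} :=
  (v |: (z |: P), [set [set v; x] | x in P] :|: [set [set z; x] | x in P]).

Definition Dz (U : {set 'I_n}) v z := [set P : {set 'I_n} | P \subset (NB E1 U v :&: NB E1 U z) & #|P| == 2].

Lemma R1_key (U : {set 'I_n}) v (p : {set 'I_n} * {set {set 'I_n}}) a b c d :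
  p.2 \subset E1 -> p.1 \subset U -> uniq [:: a; b; c; d] ->
  p.1 = [set a; b; c; d] -> p.2 = cyc a b c d -> v = a ->
  p \in \bigcup_(z in U :\ v) [set phi v z P | P in Dz U v z].
Proof.
move=> sub sU un e1 e2 ->; apply/bigcupP; exists c.
  rewrite !inE; move: un; rewrite /= !inE => /and4P[/norP[_ /norP[/eqP ac _]] _ _ _].
  rewrite eq_sym; apply/andP; split; first by apply/eqP.
  by apply: (subsetP sU); rewrite e1 !inE eqxx !orbT.
have inE1 : forall x y, [set x; y] \in cyc a b c d -> adj E1 x y.
  by move=> x y h; rewrite /adj; apply: (subsetP sub); rewrite e2.
have inU : forall x, x \in [set a; b; c; d] -> x \in U.
  by move=> x h; apply: (subsetP sU); rewrite e1.
apply/imsetP; exists [set b; d].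
  rewrite inE; apply/andP; split.
    apply/subsetP => x; rewrite !inE => /orP[]/eqP->.
      rewrite !inU ?inE ?eqxx ?orbT //= inE1 ?(adjC E1 c b) ?inE1 //.
      by rewrite /cyc !inE eqxx ?orbT.
      by rewrite /cyc !inE eqxx ?orbT.
    rewrite !inU ?inE ?eqxx ?orbT //= ?(adjC E1 a d) inE1 ?inE1 //.
    by rewrite /cyc !inE eqxx ?orbT.
    by rewrite /cyc !inE eqxx ?orbT.
  move: un; rewrite /= !inE => /and4P[_ /norP[_ bd] _ _].
  by rewrite cards2 bd.
by rewrite [p]surjective_pairing /phi e1 e2 cyc_split set4_split.
Qed.

Lemma R1 (U : {set 'I_n}) v : v \in U ->
  cnt4 U <= cnt4 (U :\ v) + \sum_(z in U :\ v) 'C(#|NB E1 U v :&: NB E1 U z|, 2).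
Proof.
move=> vU; rewrite /cnt4.
set S := [set p in C4set E1 | p.1 \subset U].
have sub : S \subset [set p in C4set E1 | p.1 \subset U :\ v] :|:
    \bigcup_(z in U :\ v) [set phi v z P | P in Dz U v z].
  apply/subsetP => p; rewrite inE => /andP[pC sU].
  case/C4setP: (pC) => sub [a [b [c [d [un e1 e2]]]]].
  case vp: (v \in p.1).
  - apply/setUP; right; rewrite e1 !inE in vp.
    repeat case/orP: vp => vp; move/eqP: vp => vp.
    + exact: (R1_key sub sU un e1 e2 vp).
    + apply: (R1_key (a:=b) (b:=c) (c:=d) (d:=a) sub sU) => //.
      * by rewrite -uniq4_rot.
      * by rewrite -set4_rot.
      * by rewrite -cyc_rot.
    + apply: (R1_key (a:=c) (b:=d) (c:=a) (d:=b) sub sU) => //.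
      * by rewrite -2!uniq4_rot.
      * by rewrite -2!set4_rot.
      * by rewrite -2!cyc_rot.
    + apply: (R1_key (a:=d) (b:=a) (c:=b) (d:=c) sub sU) => //.
      * by rewrite uniq4_rot.
      * by rewrite set4_rot.
      * by rewrite cyc_rot.
  - apply/setUP; left; rewrite inE pC /=.
    apply/subsetP => x xp; rewrite !inE (subsetP sU) // andbT.
    by apply/negP => /eqP xv; rewrite -xv xp in vp.
apply: leq_trans (subset_leq_card sub) _.
apply: leq_trans (leq_card_setU _ _) _; rewrite leq_add2l.
apply: leq_trans (card_bigcup_le _ _) _; apply: leq_sum => z _.
apply: leq_trans (leq_imset_card _ _) _.
by rewrite /Dz cards_draws.
Qed.

Lemma R2 (U : {set 'I_n}) v : v \in U -> e2c U <= e2c (U :\ v) + #|NB E2 U v|.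
Proof.
move=> vU; rewrite /e2c.
have sub : [set e in E2 | e \subset U] \subset [set e in E2 | e \subset U :\ v] :|:
   [set [set v; y] | y in NB E2 U v].
  apply/subsetP => e; rewrite inE => /andP[eE sU].
  case ve: (v \in e).
  - apply/setUP; right.
    have /eqP/cards2P [x [y [xy ee]]] := HsE (subsetP H2 _ eE); subst e.
    move: ve; rewrite !inE => /orP[]/eqP vx; subst v.
    + apply/imsetP; exists y => //; rewrite inE /adj eE andbT.
      by apply: (subsetP sU); rewrite !inE eqxx orbT.
    + apply/imsetP; exists x; last by rewrite set2C.
      rewrite inE /adj set2C eE andbT.
      by apply: (subsetP sU); rewrite !inE eqxx.
  - apply/setUP; left; rewrite inE eE /=.
    apply/subsetP => x xp; rewrite !inE (subsetP sU) // andbT.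
    by apply/negP => /eqP xv; rewrite -xv xp in ve.
apply: leq_trans (subset_leq_card sub) _.
apply: leq_trans (leq_card_setU _ _) _; rewrite leq_add2l.
exact: leq_imset_card.
Qed.

Lemma deg_split (U : {set 'I_n}) v :
  #|NB E1 U v| + #|NB E2 U v| <= #|NB E U v|.
Proof.
rewrite -cardsUI.
have -> : NB E1 U v :&: NB E2 U v = set0.
  apply/setP => x; rewrite !inE; apply/negP => /andP[/andP[_ h1] /andP[_ h2]].
  exact: (Hd h1 h2).
rewrite cards0 addn0; apply: subset_leq_card; apply/subsetP => x.
by rewrite !inE => /orP[]/andP[-> h] /=; [apply: adj1|apply: adj2].
Qed.

Lemma Phi0 : cnt4 set0 + e2c set0 = 0.
Proof.
rewrite /cnt4 /e2c.
have -> : [set p in C4set E1 | p.1 \subset set0] = set0.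
  apply/setP => p; rewrite in_set0; apply/negP; rewrite inE => /andP[pC].
  case/C4setP: pC => _ [a [b [c [d [_ e1 _]]]]].
  by rewrite e1 subset0 => /eqP/setP/(_ a); rewrite !inE eqxx.
have -> : [set e in E2 | e \subset set0] = set0.
  apply/setP => e; rewrite !inE; apply/negP => /andP[eE].
  by rewrite subset0 => /eqP ee; have := HsE (subsetP H2 _ eE); rewrite ee cards0.
by rewrite !cards0.
Qed.


Lemma inNB (F : {set {set 'I_n}}) (U : {set 'I_n}) x y :
  (y \in NB F U x) = (y \in U) && adj F x y.
Proof. by rewrite inE. Qed.

Lemma card_D1_ge (T : finType) (A : {set T}) x : #|A| <= (#|A :\ x|).+1.
Proof. by rewrite (cardsD1 x A); case: (x \in A). Qed.

Lemma card_D2 (T : finType) (A : {set T}) x y : 4 <= #|A| -> 1 < #|A :\ x :\ y|.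
Proof. have := card_D1_ge A x; have := card_D1_ge (A :\ x) y; lia. Qed.

Lemma card_D3 (T : finType) (A : {set T}) x y z : 4 <= #|A| -> 0 < #|A :\ x :\ y :\ z|.
Proof.
have := card_D1_ge A x; have := card_D1_ge (A :\ x) y;
have := card_D1_ge (A :\ x :\ y) z; lia.
Qed.

Lemma StarL (U : {set 'I_n}) u : 4 <= #|NB E U u| ->
  (forall w, w \in NB E U u -> exists2 t, t \in NB E U u & adj E w t) ->
  exists x, [/\ x \in NB E U u,
    (forall y, y \in NB E U u -> y != x -> adj E x y) &
    (forall y t, y \in NB E U u -> y != x -> t \in NB E U u -> adj E y t -> t = x)].
Proof.
set N := NB E U u => hN link.
have adjN : forall y, y \in N -> adj E u y by move=> y; rewrite inNB => /andP[].
have [w wN] : exists w, w \in N by apply/card_gt0P; lia.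
have [a aN wa] := link w wN.
have wa' : w != a := adj_neq wa.
have : 1 < #|N :\ w :\ a| by apply: card_D2.
case/card_gt1P => p [q [pN qN pq]].
move: pN qN; rewrite !inE => /and4P[pa pw pU pu] /and4P[qa qw qU qu].
have pN' : p \in N by rewrite inE pU pu.
have qN' : q \in N by rewrite inE qU qu.
have [p' p'N pp'] := link p pN'.
have [q' q'N qq'] := link q qN'.
have Hp' : (p' == w) || (p' == a).
  apply/negPn/negP; rewrite negb_or => /andP[p'w p'a].
  apply: (LF (u:=u) (a:=w) (b:=a) (p:=p) (q:=p')); rewrite ?adjN //; by rewrite eq_sym.
have Hq' : (q' == w) || (q' == a).
  apply/negPn/negP; rewrite negb_or => /andP[q'w q'a].
  apply: (LF (u:=u) (a:=w) (b:=a) (p:=q) (q:=q')); rewrite ?adjN //; by rewrite eq_sym.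
have pq' : p' = q'.
  apply/eqP/negPn/negP => ne.
  apply: (LF (u:=u) (a:=p) (b:=p') (p:=q) (q:=q')); rewrite ?adjN //.
  - by case/orP: Hq' => /eqP->.
  - by case/orP: Hp' => /eqP->; rewrite eq_sym.
subst q'.
set x := p'.
have [xb [xbN xxb xbx xbp xbq]] : exists xb, [/\ xb \in N, adj E x xb, xb != x, xb != p & xb != q].
  case/orP: Hp' => /eqP ex.
  - exists a; rewrite -ex in wa wa' *; split => //; by rewrite eq_sym.
  - exists w; rewrite -ex in wa wa' *; rewrite adjC; split => //; by rewrite eq_sym.
have part1 : forall y, y \in N -> y != x -> adj E x y.
  move=> r rN rx.
  have [r' r'N rr'] := link r rN.
  case: (eqVneq r' x) => [e|r'x]; first by rewrite adjC -e.
  have memrr : forall s, s \in N -> adj E s x -> (s == r) || (s == r').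
    move=> s sN sx; apply/negPn/negP; rewrite negb_or => /andP[sr sr'].
    apply: (LF (u:=u) (a:=s) (b:=x) (p:=r) (q:=r')); rewrite ?adjN //; by rewrite eq_sym.
  have m1 := memrr p pN' pp'.
  have m2 := memrr q qN' qq'.
  have m3 := memrr xb xbN (etrans (adjC _ _ _) xxb).
  exfalso; case/orP: m1 => /eqP e1; case/orP: m2 => /eqP e2;
  case/orP: m3 => /eqP e3; move: pq xbp xbq; by rewrite e1 e2 e3 ?eqxx.
exists x; split; [done|exact: part1|].
move=> y t yN yx tN yt; apply/eqP/negPn/negP => tx.
have : 0 < #|N :\ x :\ y :\ t| by apply: card_D3.
case/card_gt0P => r; rewrite !inE => /and5P[rt ry rx rU ru].
have rN' : r \in N by rewrite inE rU ru.
apply: (LF (u:=u) (a:=y) (b:=t) (p:=x) (q:=r)); rewrite ?adjN ?part1 //; by rewrite eq_sym.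
Qed.

Lemma half_bound k : k <= (k./2).*2.+1.
Proof. by rewrite -{1}(odd_double_half k); case: (odd k). Qed.

Lemma half6 k : 6 <= k -> 3 <= k./2.
Proof. by move/half_leq. Qed.

Lemma int_pos a b c k h : a + b - c <= k -> h < a -> h < b -> k <= h.*2.+1 -> 0 < c.
Proof. rewrite -muln2; lia. Qed.

Lemma CaseA (U : {set 'I_n}) : 6 <= #|U| ->
  (forall u, u \in U -> #|U|./2 < #|NB E U u|) -> False.
Proof.
move=> hk hdeg.
have h3 := half6 hk.
have deg4 : forall u, u \in U -> 4 <= #|NB E U u|.
  by move=> u uU; apply: leq_trans (hdeg u uU); rewrite ltnS.
have NBU : forall u y, y \in NB E U u -> y \in U by move=> u y; rewrite inNB => /andP[].
have NBa : forall u y, y \in NB E U u -> adj E u y by move=> u y; rewrite inNB => /andP[].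
have link : forall u, u \in U -> forall w, w \in NB E U u ->
    exists2 t, t \in NB E U u & adj E w t.
  move=> u uU w wN.
  have wU := NBU _ _ wN.
  have : 0 < #|NB E U u :&: NB E U w|.
    apply: (int_pos (a:=#|NB E U u|) (b:=#|NB E U w|) (k:=#|U|) (h:=#|U|./2)).
    - rewrite -cardsU; apply: subset_leq_card; apply/subsetP => y.
      by rewrite inE => /orP[] /NBU.
    - exact: hdeg.
    - exact: hdeg.
    - exact: half_bound.
  case/card_gt0P => t; rewrite inE => /andP[tu tw].
  by exists t => //; apply: NBa tw.
have [v vU] : exists v, v \in U by apply/card_gt0P; lia.
have [x [xN p1 p2]] := StarL (deg4 v vU) (link v vU).
have key : forall y, y \in NB E U v -> y != x ->
    forall s, s \in NB E U y -> s != x -> adj E x s.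
  move=> y yN yx.
  have yU := NBU _ _ yN.
  have [xy [xyN q1 q2]] := StarL (deg4 y yU) (link y yU).
  have vNy : v \in NB E U y by rewrite inNB vU adjC (NBa _ _ yN).
  have xNy : x \in NB E U y by rewrite inNB (NBU _ _ xN) adjC p1.
  case: (eqVneq v xy) => [e|vxy].
  - exfalso; subst xy.
    have : 0 < #|NB E U y :\ v :\ x|.
      by apply: leq_trans (card_D2 _ _ (deg4 y yU)).
    case/card_gt0P => s; rewrite !inE => /and4P[sx sv sU ys].
    have sNy : s \in NB E U y by rewrite inNB sU ys.
    have sNv : s \in NB E U v by rewrite inNB sU (q1 s sNy sv).
    by have := p2 y s yN yx sNv ys; move/eqP; rewrite (negbTE sx).
  - have := q2 v x vNy vxy xNy (NBa _ _ xN) => exy; subst xy.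
    exact: q1.
have : 1 < #|NB E U v :\ x|.
  have := card_D1_ge (NB E U v) x; have := deg4 v vU; lia.
case/card_gt1P => y1 [y2 []]; rewrite !inE => /and3P[y1x y1U vy1] /and3P[y2x y2U vy2] y12.
have y1N : y1 \in NB E U v by rewrite inNB y1U vy1.
have y2N : y2 \in NB E U v by rewrite inNB y2U vy2.
have : 0 < #|NB E U y2 :\ x :\ v :\ y1| by apply: card_D3; apply: deg4.
case/card_gt0P => p; rewrite !inE => /and5P[py1 pv px pU y2p].
have pN : p \in NB E U y2 by rewrite inNB pU y2p.
apply: (LF (u:=x) (a:=v) (b:=y1) (p:=y2) (q:=p)).
- by rewrite adjC NBa.
- exact: p1.
- exact: vy1.
- exact: p1.
- exact: (key y2 y2N y2x p pN px).
- exact: y2p.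
- exact: adj_neq vy2.
- by rewrite eq_sym.
- exact: y12.
- by rewrite eq_sym.
Qed.

Definition ld (U : {set 'I_n}) v z := #|NB E1 U v :&: NB E1 U z|.

Lemma eq_sym' (x y : 'I_n) : x != y -> y != x.
Proof. by rewrite eq_sym. Qed.

Lemma pick3 (a b c z p : 'I_n) : a != b -> b != c -> c != a ->
  exists2 r, (r == a) || (r == b) || (r == c) & (r != z) && (r != p).
Proof.
move=> ab bc ca.
case: (boolP ((a != z) && (a != p))) => ha; first by exists a; rewrite ?eqxx.
case: (boolP ((b != z) && (b != p))) => hb; first by exists b; rewrite ?eqxx ?orbT.
exists c; first by rewrite eqxx !orbT.
move: ha hb; rewrite !negb_and !negbK => ha hb.
apply/andP; split; apply/negP => /eqP ec; subst c;
  case/orP: ha => /eqP ea; case/orP: hb => /eqP eb; subst;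
  move: ab bc ca; by rewrite ?eqxx //=.
Qed.

Lemma inN1 (U : {set 'I_n}) v y : y \in NB E1 U v -> adj E v y.
Proof. by rewrite inNB => /andP[_ /adj1]. Qed.

Lemma link_sum (U : {set 'I_n}) v :
  \sum_(z in NB E1 U v) 'C(ld U v z, 2) <= 'C(#|NB E1 U v|.-1, 2) + #|NB E1 U v|.
Proof.
set N1 := NB E1 U v.
case: (boolP [exists t in N1, 2 < ld U v t]).
- case/exists_inP => t tN ht.
  case/card_gt2P: ht => a [b [c [[aI bI cI] [ab bc ca]]]].
  have other : forall z, z \in N1 -> z != t -> ld U v z <= 1.
    move=> z zN zt; rewrite leqNgt; apply/negP => /card_gt1P [p1 [p2 [p1I p2I p12]]].
    have eqt : forall p, p \in N1 :&: NB E1 U z -> p = t.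
      move=> p pI; apply/eqP/negPn/negP => pt.
      have [r rabc /andP[rz rp]] := pick3 z p ab bc ca.
      have rI : r \in N1 :&: NB E1 U t.
        by case/orP: rabc => [/orP[]|] /eqP->.
      move: rI pI; rewrite !inE => /andP[/andP[rU vr] /andP[_ tr]] /andP[/andP[pU vp] /andP[_ zp]].
      apply: (LF (u:=v) (a:=t) (b:=r) (p:=z) (q:=p)).
      + exact: inN1 tN.
      + exact: adj1 vr.
      + exact: adj1 tr.
      + exact: inN1 zN.
      + exact: adj1 vp.
      + exact: adj1 zp.
      + by rewrite eq_sym.
      + by rewrite eq_sym.
      + exact: rz.
      + exact: rp.
    by move: p12; rewrite (eqt _ p1I) (eqt _ p2I) eqxx.
  rewrite (bigD1 t) //= big1 ?addn0; last first.
    by move=> z /andP[zN zt]; rewrite bin_small // ltnS other.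
  apply: leq_trans (leq_addr _ _); apply: leq_bin2l.
  rewrite (cardsD1 t N1) tN /=.
  apply: subset_leq_card; apply/subsetP => y; rewrite !inE => /andP[/andP[yU vy] /andP[_ ty]].
  rewrite yU vy andbT andbT; apply/negP => /eqP yt; subst y.
  by have := adj_neq (adj1 ty); rewrite eqxx.
- move/exists_inPn => h.
  apply: leq_trans (leq_addl _ _).
  rewrite -[X in _ <= X]muln1 -sum_nat_const; apply: leq_sum => z zN.
  have := h z zN; rewrite -leqNgt.
  by case: (ld U v z) => [|[|[|]]].
Qed.

Lemma cherry_bound (U : {set 'I_n}) v w a b :
  w \in NB E1 U v -> a \in NB E1 U v -> b \in NB E1 U v -> a != b ->
  adj E1 w a -> adj E1 w b ->
  forall z, z \in U :\ v -> z \notin NB E1 U v -> ld U v z < #|NB E1 U v|.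
Proof.
move=> wN aN bN ab wa wb z zU znN.
have [s sN sz] : exists2 s, s \in NB E1 U v & s \notin NB E1 U z.
  case: (boolP (w \in NB E1 U z)) => wz; last by exists w.
  case: (boolP (a \in NB E1 U z)) => az; last by exists a.
  exfalso; move: wz az zU; rewrite !inE => /andP[_ zw] /andP[_ za] /andP[zv _].
  apply: (LF (u:=w) (a:=z) (b:=a) (p:=v) (q:=b)).
  + by rewrite adjC adj1.
  + exact: adj1 wa.
  + exact: adj1 za.
  + by rewrite adjC (inN1 wN).
  + exact: adj1 wb.
  + exact: inN1 bN.
  + exact: zv.
  + by apply/negP => /eqP e; subst; rewrite bN in znN.
  + by rewrite eq_sym (adj_neq (inN1 aN)).
  + exact: ab.
rewrite /ld (cardsD1 s (NB E1 U v)) sN add1n ltnS.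
apply: subset_leq_card; apply/subsetP => y; rewrite !inE => /andP[yv yz].
rewrite yv andbT; apply/negP => /eqP ys; subst y.
by move: yz sz; rewrite !inE => ->.
Qed.

Lemma ltn_pred' m k : m < k -> m <= k.-1.
Proof. by case: k. Qed.

Lemma StepB (U : {set 'I_n}) v : v \in U -> 8 <= #|U| -> #|NB E U v| <= #|U|./2 ->
  (\sum_(z in U :\ v) 'C(ld U v z, 2)) + #|NB E2 U v| + 1 <= Gf #|U| (#|U|./2)
  \/ ((forall x, x \in U :\: NB E1 U v -> forall y, y \in NB E1 U v -> adj E1 x y)
      /\ #|NB E1 U v| = #|U|./2).
Proof.
move=> vU hk hd.
have dd : #|NB E1 U v| + #|NB E2 U v| <= #|U|./2 := leq_trans (deg_split U v) hd.
have N1sub : NB E1 U v \subset U :\ v.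
  apply/subsetP => y yN; have vy := adj_neq (inN1 yN).
  move: yN; rewrite inNB !inE => /andP[-> _]; by rewrite eq_sym vy.
set R := (U :\ v) :\: NB E1 U v.
have Esum : \sum_(z in U :\ v) 'C(ld U v z, 2) =
    \sum_(z in NB E1 U v) 'C(ld U v z, 2) + \sum_(z in R) 'C(ld U v z, 2).
  by rewrite (big_setID (NB E1 U v)) /= (setIidPr N1sub).
have cardR : #|R| = #|U| - 1 - #|NB E1 U v|.
  by rewrite cardsD (setIidPr N1sub) (cardsD1 v U) vU add1n subn1.
have ldle : forall z, ld U v z <= #|NB E1 U v| by move=> z; apply/subset_leq_card/subsetIl.
have zRP : forall z, z \in R -> z \in U :\ v /\ z \notin NB E1 U v.
  by move=> z; rewrite inE => /andP[-> ->].
case: (boolP [exists z in NB E1 U v, 1 < ld U v z]).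
- case/exists_inP => w wN /card_gt1P [a [b [aI bI ab]]].
  move: aI bI; rewrite !inE => /andP[aN aw] /andP[bN bw].
  have aN' : a \in NB E1 U v by rewrite inE.
  have bN' : b \in NB E1 U v by rewrite inE.
  move: aw bw => /andP[_ wa] /andP[_ wb].
  left; rewrite Esum.
  apply: (arithB1 (d1 := #|NB E1 U v|)) => //.
  + by apply/card_gt0P; exists w.
  + exact: link_sum.
  + rewrite -cardR -sum_nat_const; apply: leq_sum => z zR.
    have [zU zN] := zRP z zR.
    apply: leq_bin2l; apply: ltn_pred'.
    exact: (cherry_bound wN aN' bN' ab wa wb zU zN).
- move/exists_inPn => noch.
  have S0 : \sum_(z in NB E1 U v) 'C(ld U v z, 2) = 0.
    by apply: big1 => z zN; apply: bin_small; have := noch z zN; rewrite ltnNge negbK.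
  case: (ltnP #|NB E1 U v| (#|U|./2)) => [lt|ge].
  + left; rewrite Esum S0 add0n.
    apply: (arithB2 (d1 := #|NB E1 U v|)) => //.
    rewrite -cardR -sum_nat_const; apply: leq_sum => z zR.
    exact: leq_bin2l.
  + have d1h : #|NB E1 U v| = #|U|./2 by apply/eqP; rewrite eqn_leq ge (leq_trans (leq_addr _ _) dd).
    have d20 : #|NB E2 U v| = 0.
      by move: dd; rewrite d1h -{2}[_./2]addn0 leq_add2l leqn0 => /eqP.
    case: (boolP [exists z in R, ld U v z < #|NB E1 U v|]).
    * case/exists_inP => z0 z0R lt.
      left; rewrite Esum S0 d20 add0n addn0.
      apply: (arithB3 (r := #|R|)) => //; first by rewrite cardR d1h.
      rewrite (bigD1 z0) //=; apply: leq_add.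
        by apply: leq_bin2l; rewrite -d1h; apply: ltn_pred'.
      rewrite (eq_bigl [in R :\ z0]); last by move=> i; rewrite !inE andbC.
      apply: (@leq_trans (\sum_(i in R :\ z0) 'C(#|NB E1 U v|, 2))).
        by apply: leq_sum => i _; apply: leq_bin2l.
      by rewrite sum_nat_const (cardsD1 z0 R) z0R add1n subn1 /= d1h.
    * move/exists_inPn => full; right; split=> //.
      move=> x xU y yN.
      case: (eqVneq x v) => [->|xv]; first by move: yN; rewrite inNB => /andP[].
      have xR : x \in R.
        by move: xU; rewrite !inE xv /= => /andP[-> ->].
      have ge' := full x xR; rewrite -leqNgt in ge'.
      have eqI : NB E1 U v :&: NB E1 U x = NB E1 U v.
        by apply/eqP; rewrite eqEcard subsetIl ge'.
      have : y \in NB E1 U v :&: NB E1 U x by rewrite eqI.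
      by rewrite inE => /andP[_]; rewrite inNB => /andP[_ ->].
Qed.

Section Struct.
Variables (U B : {set 'I_n}).
Hypothesis hBU : B \subset U.
Hypothesis hcr : forall x, x \in U :\: B -> forall y, y \in B -> adj E1 x y.
Hypothesis hB3 : 3 <= #|B|.
Hypothesis hA3 : 3 <= #|U :\: B|.

Lemma cross z z' : z \in U -> z' \in U -> (z \in B) != (z' \in B) -> adj E z z'.
Proof.
move=> zU z'U; case zB: (z \in B); case z'B: (z' \in B) => //= _.
- by rewrite adjC; apply: adj1; apply: hcr => //; rewrite inE z'B z'U.
- by apply: adj1; apply: hcr => //; rewrite inE zB zU.
Qed.

Lemma side_neq z z' : (z \in B) != (z' \in B) -> z != z'.
Proof. by apply: contraNneq => ->. Qed.

Lemma card_D1_ge' (T : finType) (A : {set T}) x y : 3 <= #|A| -> 0 < #|A :\ x :\ y|.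
Proof. have := card_D1_ge A x; have := card_D1_ge (A :\ x) y; lia. Qed.

Lemma pick_side (s : bool) x y : exists q, [/\ q \in U, (q \in B) = s, q != x & q != y].
Proof.
case: s.
- have : 0 < #|B :\ x :\ y| by apply: card_D1_ge'.
  case/card_gt0P => q; rewrite !inE => /and3P[qy qx qS]; exists q; split => //.
  exact: (subsetP hBU).
- have : 0 < #|(U :\: B) :\ x :\ y| by apply: card_D1_ge'.
  case/card_gt0P => q; rewrite !inE => /and4P[qy qx qB qU]; exists q; split => //.
  exact: negbTE.
Qed.

Lemma S1 s t t' : s \in U -> t \in U -> t' \in U ->
  (t \in B) = (s \in B) -> (t' \in B) = (s \in B) -> t != t' ->
  adj E s t -> adj E s t' -> False.
Proof.
move=> sU tU t'U ts t's tt' st st'.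
have [q1 [q1U q1s _ _]] := pick_side (~~ (s \in B)) s s.
have [q2 [q2U q2s q21 _]] := pick_side (~~ (s \in B)) q1 q1.
apply: (LF (u:=s) (a:=t) (b:=q1) (p:=t') (q:=q2)) => //.
- by apply: cross => //; rewrite q1s; case: (s \in B).
- by apply: cross => //; rewrite q1s ts; case: (s \in B).
- by apply: cross => //; rewrite q2s; case: (s \in B).
- by apply: cross => //; rewrite q2s t's; case: (s \in B).
- by apply: side_neq; rewrite q2s ts; case: (s \in B).
- by apply: side_neq; rewrite q1s t's; case: (s \in B).
- by rewrite eq_sym.
Qed.

Lemma S2 x y x' y' : x \in U -> y \in U -> x' \in U -> y' \in U ->
  (y \in B) = (x \in B) -> (x' \in B) = (x \in B) -> (y' \in B) = (x \in B) ->
  x != x' -> x != y' -> y != x' -> y != y' ->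
  adj E x y -> adj E x' y' -> False.
Proof.
move=> xU yU x'U y'U yx x'x y'x n1 n2 n3 n4 xy x'y'.
have [q [qU qs _ _]] := pick_side (~~ (x \in B)) x x.
apply: (LF (u:=q) (a:=x) (b:=y) (p:=x') (q:=y')) => //.
- by apply: cross => //; rewrite qs; case: (x \in B).
- by apply: cross => //; rewrite qs yx; case: (x \in B).
- by apply: cross => //; rewrite qs x'x; case: (x \in B).
- by apply: cross => //; rewrite qs y'x; case: (x \in B).
Qed.

Lemma S3 x y x' y' : x \in U -> y \in U -> x' \in U -> y' \in U ->
  (y \in B) = (x \in B) -> (x' \in B) = ~~ (x \in B) -> (y' \in B) = ~~ (x \in B) ->
  adj E x y -> adj E x' y' -> False.
Proof.
move=> xU yU x'U y'U yx x'x y'x xy x'y'.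
have [q [qU qs qx qy]] := pick_side (x \in B) x y.
apply: (LF (u:=x') (a:=x) (b:=y) (p:=y') (q:=q)) => //.
- by apply: cross => //; rewrite x'x; case: (x \in B).
- by apply: cross => //; rewrite x'x yx; case: (x \in B).
- by apply: cross => //; rewrite x'x qs; case: (x \in B).
- by apply: cross => //; rewrite y'x qs; case: (x \in B).
- by apply: side_neq; rewrite y'x; case: (x \in B).
- by rewrite eq_sym.
- by apply: side_neq; rewrite y'x yx; case: (x \in B).
- by rewrite eq_sym.
Qed.

Lemma I1 x y x' y' : x \in U -> y \in U -> x' \in U -> y' \in U ->
  adj E x y -> adj E x' y' -> (y \in B) = (x \in B) -> (y' \in B) = (x' \in B) ->
  [set x; y] = [set x'; y'].
Proof.
move=> xU yU x'U y'U xy x'y' yx y'x'.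
case: (boolP ([set x; y] == [set x'; y'])) => [/eqP //|ne]; exfalso.
case: (eqVneq (x' \in B) (x \in B)) => [sd|sd]; last first.
  apply: (S3 xU yU x'U y'U yx) => //.
  - by move: sd; case: (x' \in B); case: (x \in B).
  - by rewrite y'x'; move: sd; case: (x' \in B); case: (x \in B).
have y'x : (y' \in B) = (x \in B) by rewrite y'x'.
case: (eqVneq x x') => [e|n1].
  subst x'; apply: (S1 xU yU y'U yx y'x _ xy x'y').
  by apply: contra ne => /eqP->.
case: (eqVneq x y') => [e|n2].
  subst y'; apply: (S1 xU yU x'U yx sd _ xy); last by rewrite adjC.
  by apply: contra ne => /eqP->; rewrite set2C.
case: (eqVneq y x') => [e|n3].
  subst x'; apply: (S1 yU xU y'U (esym yx) y'x' n2 _ x'y').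
  by rewrite adjC.
case: (eqVneq y y') => [e|n4].
  subst y'; apply: (S1 yU xU x'U (esym yx) _ n1); first by rewrite sd yx.
  - by rewrite adjC.
  - by rewrite adjC.
exact: (S2 xU yU x'U y'U yx sd y'x n1 n2 n3 n4 xy x'y').
Qed.

Lemma cross1 z z' : z \in U -> z' \in U -> (z \in B) != (z' \in B) -> adj E1 z z'.
Proof.
move=> zU z'U; case zB: (z \in B); case z'B: (z' \in B) => //= _.
- by rewrite adjC; apply: hcr => //; rewrite inE z'B z'U.
- by apply: hcr => //; rewrite inE zB zU.
Qed.

Lemma e2_struct : e2c U <= 1.
Proof.
apply/card_le1_eqP => e e'; rewrite !inE => /andP[eE eU] /andP[e'E e'U].
have inside : forall f, f \in E2 -> f \subset U -> exists x y,
    [/\ f = [set x; y], x \in U, y \in U, adj E x y & (y \in B) = (x \in B)].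
  move=> f fE fU.
  have /eqP/cards2P [x [y [xy ef]]] := HsE (subsetP H2 _ fE); subst f.
  have xU : x \in U by apply: (subsetP fU); rewrite !inE eqxx.
  have yU : y \in U by apply: (subsetP fU); rewrite !inE eqxx orbT.
  exists x, y; split => //; first exact: adj2.
  apply/eqP/negPn/negP => sd.
  by apply: (Hd (e:=[set x; y])) => //; apply: cross1; rewrite // eq_sym.
have [x [y [-> xU yU xy sxy]]] := inside e eE eU.
have [x' [y' [-> x'U y'U x'y' sx'y']]] := inside e' e'E e'U.
exact: I1.
Qed.

Lemma common_same a z t : a \in U -> z \in U -> t \in U -> a != z ->
  (z \in B) = (a \in B) -> adj E a t -> adj E z t -> (t \in B) != (a \in B).
Proof.
move=> aU zU tU az za hat zt; apply/negP => /eqP ta.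
have := I1 aU tU zU tU hat zt ta (etrans ta (esym za)).
case/set2_eq => [[e _]|[e1 e2]]; first by rewrite e eqxx in az.
by subst; rewrite eqxx in az.
Qed.

Lemma common_cross a z t1 t2 : a \in U -> z \in U -> t1 \in U -> t2 \in U ->
  (z \in B) != (a \in B) -> adj E a t1 -> adj E z t1 -> adj E a t2 -> adj E z t2 ->
  t1 = t2.
Proof.
move=> aU zU t1U t2U za at1 zt1 at2 zt2.
have zb : (z \in B) = ~~ (a \in B) by move: za; case: (z \in B); case: (a \in B).
have side : forall t, (t \in B) = (a \in B) \/ (t \in B) = (z \in B).
  by move=> t; rewrite zb; case: (t \in B); case: (a \in B); auto.
case: (side t1) => s1; case: (side t2) => s2.
- case/set2_eq: (I1 aU t1U aU t2U at1 at2 s1 s2) => [[_ //]|[e1 e2]].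
  by subst; have := adj_neq at1; rewrite eqxx.
- case/set2_eq: (I1 aU t1U zU t2U at1 zt2 s1 s2) => [[e _]|[e1 e2]].
    by move: za; rewrite e eqxx.
  by move: za; rewrite e1 s2 eqxx.
- case/set2_eq: (I1 zU t1U aU t2U zt1 at2 s1 s2) => [[e _]|[e1 e2]].
    by move: za; rewrite e eqxx.
  by move: za; rewrite e1 s2 eqxx.
- case/set2_eq: (I1 zU t1U zU t2U zt1 zt2 s1 s2) => [[_ //]|[e1 e2]].
  by subst; have := adj_neq zt1; rewrite eqxx.
Qed.

Lemma cnt0 : cnt4 set0 = 0.
Proof. by have := Phi0; case: (cnt4 set0). Qed.

Lemma cnt_struct m : forall A' B' : {set 'I_n}, A' \subset U :\: B -> B' \subset B ->
  #|A'| + #|B'| = m -> cnt4 (A' :|: B') <= 'C(#|A'|, 2) * 'C(#|B'|, 2).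
Proof.
have BU : forall x, x \in B -> x \in U by move=> x; apply: (subsetP hBU).
elim: m => [|m IH] A' B' hA hB hm.
  have A0 : A' = set0 by apply: cards0_eq; lia.
  have B0 : B' = set0 by apply: cards0_eq; lia.
  by rewrite A0 B0 setU0 cnt0.
have inA : forall x, x \in A' -> x \in U /\ x \notin B.
  by move=> x /(subsetP hA); rewrite inE => /andP[].
have inB : forall x, x \in B' -> x \in U /\ x \in B.
  by move=> x /(subsetP hB) xB; split => //; apply: BU.
case: (set_0Vmem A') => [A0|[a aA]].
- subst A'; rewrite set0U cards0 /= mul0n.
  have [b bB] : exists b, b \in B' by apply/card_gt0P; rewrite cards0 in hm; lia.
  apply: leq_trans (R1 bB) _.
  have -> : \sum_(z in B' :\ b) 'C(#|NB E1 B' b :&: NB E1 B' z|, 2) = 0.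
    apply: big1 => z; rewrite !inE => /andP[zb zB].
    have -> : NB E1 B' b :&: NB E1 B' z = set0.
      apply/setP => t; rewrite !inE; apply/negP => /andP[/andP[tB bt] /andP[_ zt]].
      have [bU bBB] := inB b bB; have [zU zBB] := inB z zB; have [tU tBB] := inB t tB.
      have := common_same bU zU tU (eq_sym' zb) (etrans zBB (esym bBB)) (adj1 bt) (adj1 zt).
      by rewrite tBB bBB.
    by rewrite cards0.
  rewrite addn0.
  have := IH set0 (B' :\ b) (sub0set _) (subset_trans (subsetDl _ _) hB).
  rewrite set0U cards0 /= mul0n => ->//.
  by move: hm; rewrite cards0 (cardsD1 b B') bB add0n add1n => -[].
- have aU' : a \in A' :|: B' by rewrite inE aA.
  apply: leq_trans (R1 aU') _.
  have [aU aB] := inA a aA.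
  have eqU : (A' :|: B') :\ a = (A' :\ a) :|: B'.
    apply/setP => z; rewrite !inE; case: (eqVneq z a) => [->|] //=.
    by case aB': (a \in B') => //; have [_ aBB] := inB a aB'; rewrite aBB in aB.
  rewrite eqU.
  have hm' : #|A' :\ a| + #|B'| = m.
    by move: hm; rewrite (cardsD1 a A') aA add1n addSn => -[].
  have := IH (A' :\ a) B' (subset_trans (subsetDl _ _) hA) hB hm'.
  move=> hIH.
  have hsum : \sum_(z in (A' :\ a) :|: B') 'C(#|NB E1 (A' :|: B') a :&: NB E1 (A' :|: B') z|, 2)
      <= #|A' :\ a| * 'C(#|B'|, 2).
    rewrite (big_setID B) /=.
    rewrite big1 ?add0n; last first.
      move=> z; rewrite !inE => /andP[_ zB]; apply: bin_small; rewrite ltnS.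
      apply/card_le1_eqP => t1 t2; rewrite !inE.
      move=> /andP[/andP[t1U at1] /andP[_ zt1]] /andP[/andP[t2U at2] /andP[_ zt2]].
      have tU : forall t, (t \in A') || (t \in B') -> t \in U.
        by move=> t /orP[/inA[]|/inB[]].
      apply/esym; apply: (common_cross aU (BU z zB) (tU _ t1U) (tU _ t2U)) => //.
      - by rewrite zB (negbTE aB).
      - exact: adj1.
      - exact: adj1.
      - exact: adj1.
      - exact: adj1.
    have sub : ((A' :\ a) :|: B') :\: B \subset A' :\ a.
      apply/subsetP => z; rewrite !inE => /andP[zB /orP[//|zB']].
      by have [_ zBB] := inB z zB'; rewrite zBB in zB.
    apply: leq_trans (_ : \sum_(z in ((A' :\ a) :|: B') :\: B) 'C(#|B'|, 2) <= _).
      apply: leq_sum => z; rewrite !inE => /andP[zB /orP[/andP[za zA]|zB']]; last first.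
        by have [_ zBB] := inB z zB'; rewrite zBB in zB.
      apply: leq_bin2l; apply: subset_leq_card; apply/subsetP => t.
      rewrite !inE => /andP[/andP[tU' at1] /andP[_ zt]].
      case/orP: tU' => // tA.
      have [zU _] := inA z zA; have [tU tB] := inA t tA.
      have zaB : (z \in B) = (a \in B) by rewrite (negbTE zB) (negbTE aB).
      have := common_same aU zU tU (eq_sym' za) zaB (adj1 at1) (adj1 zt).
      by rewrite (negbTE tB) (negbTE aB).
    by rewrite sum_nat_const leq_mul2r (subset_leq_card sub) orbT.
  apply: leq_trans (leq_add hIH hsum) _.
  rewrite (cardsD1 a A') aA add1n /= binS2 mulnDl.
  done.
Qed.

Lemma Phi_struct : cnt4 U + e2c U <= 'C(#|U :\: B|, 2) * 'C(#|B|, 2) + 1.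
Proof.
apply: leq_add e2_struct.
have eqU : (U :\: B) :|: B = U.
  apply/setP => x; rewrite !inE; case xB: (x \in B); rewrite /= ?andbT ?orbF //.
  by rewrite (subsetP hBU) ?xB.
have := cnt_struct (subxx (U :\: B)) (subxx B) (erefl (#|U :\: B| + #|B|)).
by rewrite eqU.
Qed.

End Struct.

Lemma crude (U : {set 'I_n}) : cnt4 U + e2c U <= #|U| ^ 4.
Proof.
move: {2}#|U| (erefl #|U|) => k; elim: k U => [|k IH] U hk.
  by rewrite (cards0_eq hk) Phi0.
have [v vU] : exists v, v \in U by apply/card_gt0P; rewrite hk.
have h1 := R1 vU; have h2 := R2 vU.
have hk' : #|U :\ v| = k by move: hk; rewrite (cardsD1 v U) vU add1n => -[].
have h3 := IH (U :\ v) hk'.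
have h4 : \sum_(z in U :\ v) 'C(#|NB E1 U v :&: NB E1 U z|, 2) <= k * 'C(k.+1, 2).
  rewrite -hk -hk' -sum_nat_const; apply: leq_sum => z _; apply: leq_bin2l.
  by apply: subset_leq_card; apply/subsetP => y; rewrite !inE => /andP[/andP[]].
have h5 : #|NB E2 U v| <= k.+1.
  by rewrite -hk; apply: subset_leq_card; apply/subsetP => y; rewrite inE => /andP[].
have := crude_step k.
move: h1 h2 h3 h4 h5.
set S := \sum_(z in U :\ v) _.
set c1 := cnt4 U; set c2 := cnt4 (U :\ v); set e1 := e2c U; set e2 := e2c (U :\ v).
set d := #|NB E2 U v|; set K := k * 'C(k.+1, 2).
lia.
Qed.

Definition B0 := 8 ^ 4 + 8.

Lemma sub_half k : k - k./2 = uphalf k.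
Proof. rewrite uphalf_half -{1}(odd_double_half k) -addnn addnA addnK; done. Qed.

Lemma main_ind (U : {set 'I_n}) : cnt4 U + e2c U <= Tf #|U| + 1 + (B0 - #|U|).
Proof.
have [k hk] : exists k, #|U| = k by eexists.
elim: k U hk => [|k IH] U hk.
  by rewrite (cards0_eq hk) Phi0.
case: (leqP k.+1 8) => [small|big].
  apply: leq_trans (crude U) _; rewrite hk.
  have : k.+1 ^ 4 <= 8 ^ 4 by rewrite leq_exp2r.
  rewrite /B0; set X := k.+1 ^ 4; set Y := Tf k.+1; lia.
have [v0 v0U] : exists v, v \in U by apply/card_gt0P; rewrite hk.
case: (arg_minnP (fun x => #|NB E U x|) v0U) => v vU0 vmin.
have vU : v \in U by [].
have h8 : 8 <= #|U| by rewrite hk; apply: ltnW.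
case: (leqP #|NB E U v| (#|U|./2)) => [hd|hd]; last first.
  exfalso; apply: (CaseA (U:=U)); first by lia.
  by move=> u uU; apply: leq_trans hd (vmin u uU).
have hk' : #|U :\ v| = k by move: hk; rewrite (cardsD1 v U) vU add1n => -[].
have h1 := R1 vU; have h2 := R2 vU.
have h3 := IH (U :\ v) hk'.
case: (StepB vU h8 hd) => [hs|[hcr' hN1]].
- have ht : Tf k + Gf #|U| (#|U|./2) = Tf #|U| by rewrite hk; exact: (Tstep (ltn0Sn k)).
  move: h1 h2 h3 hs ht; rewrite hk'.
  set S := \sum_(z in U :\ v) _.
  set c1 := cnt4 U; set c2 := cnt4 (U :\ v); set e1 := e2c U; set e2 := e2c (U :\ v).
  set d := #|NB E2 U v|; set G := Gf _ _; set T1 := Tf k; set T2 := Tf #|U|.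
  rewrite /ld -/S; rewrite hk; lia.
- have hB : NB E1 U v \subset U by apply/subsetP => y; rewrite inE => /andP[].
  have h4 : 4 <= #|U|./2 by move/half_leq: h8.
  have hA : #|U :\: NB E1 U v| = uphalf #|U| by rewrite cardsDS // hN1 sub_half.
  have := Phi_struct hB hcr'.
  rewrite hA hN1 mulnC -/(Tf #|U|) => H.
  have a1 : 2 < #|U|./2 by apply: leq_trans h4.
  have a2 : 2 < uphalf #|U| by rewrite uphalf_half; apply: leq_trans a1 (leq_addl _ _).
  apply: leq_trans (H a1 a2) _; exact: leq_addr.
Qed.

End Graph.

Lemma upper n (E : {set {set 'I_n}}) (c : {set 'I_n} -> bool) :
  simple_graph E -> free F2 E -> B0 <= n ->
  col_count C4 K2 E c <= 'C(n./2, 2) * 'C(uphalf n, 2) + 1.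
Proof.
move=> sE fE hn.
set E1 := colour_class E c true; set E2 := colour_class E c false.
have H1 : E1 \subset E by apply/subsetP => e; rewrite inE => /andP[].
have H2 : E2 \subset E by apply/subsetP => e; rewrite inE => /andP[].
have Hd : forall e, e \in E1 -> e \in E2 -> False.
  by move=> e; rewrite !inE => /andP[_ /eqP->] /andP[_ /eqP].
have := main_ind sE fE H1 H2 Hd setT.
rewrite cardsT card_ord.
have -> : B0 - n = 0 by apply/eqP; rewrite subn_eq0.
rewrite addn0 /col_count /Tf.
have -> : copies C4 E1 = cnt4 E1 setT.
  rewrite copiesC4E /cnt4; apply: eq_card => p; rewrite !inE subsetT andbT //.
have -> : copies K2 E2 = e2c E2 setT.
  rewrite copiesK2; last by move=> e /(subsetP H2) /sE.
  by rewrite /e2c; apply: eq_card => e; rewrite !inE subsetT andbT.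
done.
Qed.

Lemma inj5 n (g : nat -> 'I_n) : uniq [:: g 0; g 1; g 2; g 3; g 4] ->
  forall i k, i < 5 -> k < 5 -> g i = g k -> i = k.
Proof.
move=> un i k hi hk.
case: i hi => [|[|[|[|[|i]]]]] // _; case: k hk => [|[|[|[|[|k]]]]] // _ e;
  apply/eqP; move: un; (try rewrite e); by rewrite /= !inE ?eqxx /= ?orbT /= ?andbF.
Qed.

Lemma two_sets n (g : nat -> 'I_n) i j k l : uniq [:: g 0; g 1; g 2; g 3; g 4] ->
  i < 5 -> j < 5 -> k < 5 -> l < 5 ->
  ~~ ((i \in [:: k; l]) && (j \in [:: k; l])) ->
  [set g i; g j] = [set g k; g l] -> False.
Proof.
move=> un hi hj hk hl hn /set2_eq [[e1 e2]|[e1 e2]].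
- have ei := inj5 un hi hk e1; have ej := inj5 un hj hl e2.
  by rewrite ei ej !inE !eqxx /= ?orbT in hn.
- have ei := inj5 un hi hl e1; have ej := inj5 un hj hk e2.
  by rewrite ei ej !inE !eqxx /= ?orbT in hn.
Qed.

Section Lower.
Variable n : nat.
Variable A : {set 'I_n}.
Variables x0 x1 : 'I_n.
Hypothesis x01 : x0 != x1.
Hypothesis x0A : x0 \notin A.
Hypothesis x1A : x1 \notin A.

Definition extra := [set x0; x1].
Definition Elow : {set {set 'I_n}} :=
  [set e : {set 'I_n} | [exists x, [exists y, [&& x \in A, y \notin A & e == [set x; y]]]]]
  :|: [set extra].
Definition clow (e : {set 'I_n}) := e != extra.

Lemma cross_in x y : x \in A -> y \notin A -> [set x; y] \in Elow.
Proof.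
move=> xA yA; rewrite !inE; apply/orP; left.
by apply/existsP; exists x; apply/existsP; exists y; rewrite xA yA eqxx.
Qed.

Lemma Elow_edge x y : [set x; y] \in Elow ->
  ((x \in A) != (y \in A)) \/ [set x; y] = extra.
Proof.
rewrite !inE => /orP[/existsP[a /existsP[b /and3P[aA bA /eqP e]]]|/eqP e]; last by right.
left; case/set2_eq: e => [[-> ->]|[-> ->]]; by rewrite aA (negbTE bA).
Qed.

Lemma tri a b c : [set a; b] \in Elow -> [set a; c] \in Elow -> [set b; c] \in Elow ->
  [\/ [set a; b] = extra, [set a; c] = extra | [set b; c] = extra].
Proof.
case/Elow_edge => [h1|->]; last by constructor 1.
case/Elow_edge => [h2|->]; last by constructor 2.
case/Elow_edge => [h3|->]; last by constructor 3.
by move: h1 h2 h3; case: (a \in A); case: (b \in A); case: (c \in A).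
Qed.

Lemma Elow_simple : simple_graph Elow.
Proof.
move=> e; rewrite !inE => /orP[/existsP[a /existsP[b /and3P[aA bA /eqP ->]]]|/eqP ->].
- rewrite cards2; case: eqP => // ab; by move: bA; rewrite -ab aA.
- by rewrite /extra cards2 x01.
Qed.

Lemma Elow_free : free F2 Elow.
Proof.
rewrite /free; apply/eqP; rewrite -/(F2set Elow) cards_eq0; apply/eqP/setP => p.
rewrite in_set0; apply/negP => /F2set_elim [g [un h01 h02 h12 [h03 h04 h34]]].
have T1 := tri h01 h02 h12.
have T2 := tri h03 h04 h34.
case: T1 => e1; case: T2 => e2; rewrite -e2 in e1;
  by apply: (two_sets un _ _ _ _ _ e1).
Qed.

Lemma side_eqF x y : x \in A -> y \notin A -> (x == y) = false.
Proof. by move=> xA yA; apply/negbTE; apply/eqP => e; rewrite -e xA in yA. Qed.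

Lemma cross_E1 x y : x \in A -> y \notin A -> [set x; y] \in colour_class Elow clow true.
Proof.
move=> xA yA; rewrite inE cross_in //= /clow eqb_id.
apply/eqP => /setP/(_ x); rewrite !inE eqxx /= => /esym/orP[]/eqP e.
- by move: x0A; rewrite -e xA.
- by move: x1A; rewrite -e xA.
Qed.

Lemma E2low_eq : colour_class Elow clow false = [set extra].
Proof.
apply/setP => e; rewrite inE [in RHS]inE /clow.
case: (eqVneq e extra) => [->|ne] /=.
  by rewrite /Elow !inE eqxx ?orbT ?andbT.
by rewrite andbF.
Qed.

Lemma K2low : copies K2 (colour_class Elow clow false) = 1.
Proof.
rewrite copiesK2; first by rewrite E2low_eq cards1.
move=> e; rewrite inE => /andP[eE _]; exact: Elow_simple.
Qed.

Lemma C4low : 'C(#|A|, 2) * 'C(#|~: A|, 2) <= copies C4 (colour_class Elow clow true).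
Proof.
set D := fun X : {set 'I_n} => [set P : {set 'I_n} | P \subset X & #|P| == 2].
have sub : setX (D A) (D (~: A)) \subset
    [set (p.1 :&: A, p.1 :&: ~: A) | p in C4set (colour_class Elow clow true)].
  apply/subsetP => -[P Q]; rewrite inE /= !inE.
  move=> /andP[/andP[PA P2] /andP[QB Q2]].
  move: P2 => /cards2P [a1 [a2 [a12 eP]]].
  move: Q2 => /cards2P [b1 [b2 [b12 eQ]]].
  subst P Q.
  have a1A : a1 \in A by apply: (subsetP PA); rewrite !inE eqxx.
  have a2A : a2 \in A by apply: (subsetP PA); rewrite !inE eqxx orbT.
  have b1A : b1 \notin A.
    by have := subsetP QB b1; rewrite !inE eqxx /= => /(_ isT).
  have b2A : b2 \notin A.
    by have := subsetP QB b2; rewrite !inE eqxx orbT /= => /(_ isT).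
  apply/imsetP; exists ([set a1; b1; a2; b2], cyc a1 b1 a2 b2).
  - apply/C4setP; split.
    + apply/subsetP => e H; rewrite /cyc !inE in H.
      repeat case/orP: H => H; move/eqP: H => ->;
        first [by apply: cross_E1 | by rewrite set2C; apply: cross_E1].
    + exists a1, b1, a2, b2; split => //.
      by rewrite /= !inE (side_eqF a1A b1A) (side_eqF a1A b2A) (negbTE a12) (negbTE b12)
        (eq_sym b1 a2) (side_eqF a2A b1A) (side_eqF a2A b2A).
  - congr (_, _); apply/setP => x; rewrite !inE; case xA: (x \in A).
    all: try (rewrite (side_eqF xA b1A) (side_eqF xA b2A)).
    all: try (rewrite (eq_sym x a1) (eq_sym x a2) (side_eqF a1A (negbT xA))
                (side_eqF a2A (negbT xA))).
    all: rewrite /= ?orbF ?andbT ?andbF //.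
rewrite -(cards_draws A 2) -(cards_draws (~: A) 2) -cardsX.
apply: leq_trans (subset_leq_card sub) _.
rewrite copiesC4E; exact: leq_imset_card.
Qed.

Lemma col_low : col_count C4 K2 Elow clow >= 'C(#|A|, 2) * 'C(#|~: A|, 2) + 1.
Proof. by rewrite /col_count K2low leq_add2r C4low. Qed.

End Lower.

Theorem mainTheorem9 : exists N : nat, forall n : nat, N <= n ->
  (forall (E : {set {set 'I_n}}) (c : {set 'I_n} -> bool),
     simple_graph E -> free F2 E ->
     col_count C4 K2 E c <= 'C(n./2, 2) * 'C(uphalf n, 2) + 1) /\
  (exists (E : {set {set 'I_n}}) (c : {set 'I_n} -> bool),
     [/\ simple_graph E, free F2 E &
     col_count C4 K2 E c = 'C(n./2, 2) * 'C(uphalf n, 2) + 1]).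
Proof.
exists B0 => n hn; split.
  by move=> E c sE fE; apply: upper.
have hn4 : 4 <= n by apply: leq_trans hn.
have [A hA] : exists A : {set 'I_n}, #|A| = n./2.
  have : 0 < #|[set A : {set 'I_n} | #|A| == n./2]|.
    rewrite card_draws card_ord bin_gt0.
    by have := half_le n; lia.
  by case/card_gt0P => A; rewrite inE => /eqP hA; exists A.
have hC : #|~: A| = uphalf n.
  have := cardsC A; rewrite card_ord hA => h; have e := sub_half n.
  move: h e; set c := #|~: A|; set m := n./2; set u := uphalf n; lia.
have : 1 < #|~: A|.
  rewrite hC uphalf_half; apply: leq_trans (leq_addl _ _).
  by move/half_leq: hn4.
case/card_gt1P => x0 [x1 [x0A x1A x01]].
rewrite inE in x0A; rewrite inE in x1A.
exists (Elow A x0 x1), (clow x0 x1); split.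
- by apply: Elow_simple.
- by apply: Elow_free.
- apply/eqP; rewrite eqn_leq upper //=; last by apply: Elow_free.
  + by have := col_low x01 x0A x1A; rewrite hA hC.
  + by apply: Elow_simple.
Qed.
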